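(* Let $G$ be a compact group and $\{U_g\}_{g\in G}$ a unitary representation of $G$ on $\mathbb{C}^{d_Ad_B}$ which decomposes into $k$ pairwise inequivalent irreducible representations with multiplicities $\{m_i\}_{i=1}^k$. If $\rho_{A^nB^n}$ is a positive semidefinite operator on $(\mathbb{C}^{d_Ad_B})^{\otimes n}$ that is permutation-invariant and IID-$G$-invariant, then there exists a purification $|\Psi\rangle\in(\mathbb{C}^{d_Ad_B}\otimes\mathbb{C}^{d_Ad_B})^{\otimes n}$ of $\rho_{A^nB^n}$ supported on $\mathrm{Sym}^n(W)$ for a subspace $W\subseteq\mathbb{C}^{d_Ad_B}\otimes\mathbb{C}^{d_Ad_B}$ isomorphic to $\bigoplus_{i=1}^k\mathbb{C}^{m_i}\otimes\mathbb{C}^{m_i}$ (so $\dim W=\sum_{i=1}^k m_i^2$).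
   Context: $\rho$ on $(\mathbb{C}^{d_Ad_B})^{\otimes n}$ is permutation-invariant if it is invariant under conjugation by the unitaries permuting the $n$ tensor factors. It is IID-$G$-invariant if $U_{\vec g}\rho U_{\vec g}^\dagger=\rho$ for all $\vec g=(g_1,\dots,g_n)\in G^n$, where $U_{\vec g}=\bigotimes_{i=1}^nU_{g_i}$. $\mathrm{Sym}^n(W)$ is the symmetric subspace of $W^{\otimes n}\subseteq(\mathbb{C}^{d_Ad_B}\otimes\mathbb{C}^{d_Ad_B})^{\otimes n}$; the purification traces out the second copy of $\mathbb{C}^{d_Ad_B}$ in each of the $n$ pairs. *)

(* Defs.v *)
From HB Require Import structures.
From mathcomp Require Import all_boot all_order all_algebra all_fingroup.
From mathcomp Require Import all_classical all_reals all_analysis.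
From mathcomp Require Import complex.
Import numFieldTopology.Exports.
Set Implicit Arguments. Unset Strict Implicit. Unset Printing Implicit Defensive.
Import Order.TTheory GRing.Theory Num.Theory.
Local Open Scope ring_scope.

Section Defs.
Variable R : realType.
Local Notation C := (R[i]).

Definition compact_group (G : topologicalType) (mul : G -> G -> G) (one : G)
  (inv : G -> G) : Prop :=
  [/\ (forall a b c, mul a (mul b c) = mul (mul a b) c),
      (forall a, mul one a = a /\ mul a one = a),
      (forall a, mul (inv a) a = one /\ mul a (inv a) = one),
      continuous (fun p : G * G => mul p.1 p.2) /\ continuous inv
    & compact [set: G] /\ hausdorff_space G].

Definition is_rep (G : Type) (mul : G -> G -> G) (one : G) (d : nat)
  (pi : G -> 'M[C]_d) : Prop :=
  (forall g h, pi (mul g h) = pi g *m pi h) /\ pi one = 1%:M.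

Definition adjmx (p q : nat) (A : 'M[C]_(p, q)) : 'M[C]_(q, p) :=
  map_mx (fun z => Num.conj z) A^T.

Definition unitary_rep (G : topologicalType) (mul : G -> G -> G) (one : G)
  (d : nat) (U : G -> 'M[C]_d) : Prop :=
  [/\ is_rep mul one U,
      (forall g, U g *m adjmx (U g) = 1%:M)
    & (forall i j, continuous (fun g => @complex.Re R (U g i j)) /\
                   continuous (fun g => @complex.Im R (U g i j)))].

(* Subspaces of C^d are encoded as row spaces S of mxalgebra (vectors written
   as rows); the column vector v^T is mapped by pi g to (v *m (pi g)^T)^T. *)
Definition irreducible_rep (G : Type) (d : nat) (pi : G -> 'M[C]_d) : Prop :=
  (0 < d)%N /\
  forall S : 'M[C]_d, (forall g, (S *m (pi g)^T <= S)%MS) ->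
    (S == (0 : 'M[C]_d))%MS \/ row_full S.

Definition rep_equiv (G : Type) (d1 d2 : nat) (pi1 : G -> 'M[C]_d1)
  (pi2 : G -> 'M[C]_d2) : Prop :=
  exists T : 'M[C]_(d1, d2),
    [/\ row_free T, row_full T & forall g, pi1 g *m T = T *m pi2 g].

(* U decomposes into k pairwise inequivalent irreducible representations
   pi_1..pi_k with multiplicities m_1..m_k:
   C^D = (+)_{i, a < m i} Im (E i a), a direct sum (P i a are the coordinate
   projections), each summand invariant and U restricted to it equivalent to pi i. *)
Definition decomposes (G : Type) (mul : G -> G -> G) (one : G) (D k : nat)
  (U : G -> 'M[C]_D) (m : 'I_k -> nat) : Prop :=
  (forall i, 0 < m i)%N /\
  exists (d : 'I_k -> nat) (pi : forall i, G -> 'M[C]_(d i)),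
    [/\ (forall i, is_rep mul one (pi i)),
        (forall i, irreducible_rep (pi i)),
        (forall i j, i != j -> ~ rep_equiv (pi i) (pi j))
      & exists (E : forall i, 'I_(m i) -> 'M[C]_(D, d i))
               (P : forall i, 'I_(m i) -> 'M[C]_(d i, D)),
          [/\ (forall i a g, U g *m E i a = E i a *m pi i g),
              (forall i a, P i a *m E i a = 1%:M),
              (forall i a i' a', (i != i') || (val a != val a') ->
                   P i a *m E i' a' = 0)
            & \sum_(i < k) \sum_(a < m i) E i a *m P i a = 1%:M]].

(* Computational basis of (C^D)^{(x)n}: functions 'I_n -> 'I_D. *)
Definition tidx (D n : nat) := {ffun 'I_n -> 'I_D}.
Definition op (D n : nat) := tidx D n -> tidx D n -> C.

Definition opmul (D n : nat) (A B : op D n) : op D n :=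
  fun x y => \sum_(z : tidx D n) A x z * B z y.
Definition opadj (D n : nat) (A : op D n) : op D n :=
  fun x y => Num.conj (A y x).

(* U_{g_1} (x) ... (x) U_{g_n} *)
Definition tensor_op (D n : nat) (V : 'I_n -> 'M[C]_D) : op D n :=
  fun x y => \prod_(i < n) V i (x i) (y i).

Definition perm_op (D n : nat) (s : 'S_n) : op D n :=
  fun x y => (x == [ffun i => y ((s^-1)%g i)])%:R.

Definition conj_invariant (D n : nat) (A rho : op D n) : Prop :=
  forall x y, opmul (opmul A rho) (opadj A) x y = rho x y.

Definition perm_invariant (D n : nat) (rho : op D n) : Prop :=
  forall s : 'S_n, conj_invariant (@perm_op D n s) rho.

Definition iid_invariant (G : Type) (D n : nat) (U : G -> 'M[C]_D)
  (rho : op D n) : Prop :=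
  forall g : 'I_n -> G, conj_invariant (tensor_op (fun i => U (g i))) rho.

Definition psd (D n : nat) (rho : op D n) : Prop :=
  (forall x y, rho y x = Num.conj (rho x y)) /\
  forall v : tidx D n -> C,
    0 <= \sum_(x : tidx D n) \sum_(y : tidx D n) Num.conj (v x) * rho x y * v y.

(* basis of (C^D (x) C^D)^{(x)n}: for each of the n pairs, a pair of indices;
   the first component is the system, the second the purifying copy *)
Definition tidx2 (D n : nat) := {ffun 'I_n -> 'I_D * 'I_D}.
Definition pairff (D n : nat) (x z : tidx D n) : tidx2 D n :=
  [ffun i => (x i, z i)].

Definition purifies (D n : nat) (Psi : tidx2 D n -> C) (rho : op D n) : Prop :=
  forall x y : tidx D n,
    \sum_(z : tidx D n) Psi (pairff x z) * Num.conj (Psi (pairff y z)) = rho x y.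

Definition lin_indep (D r : nat) (w : 'I_r -> 'I_D * 'I_D -> C) : Prop :=
  forall c : 'I_r -> C, (forall p, \sum_(j < r) c j * w j p = 0) ->
    forall j, c j = 0.

Definition in_tensor_power (D n r : nat) (w : 'I_r -> 'I_D * 'I_D -> C)
  (Psi : tidx2 D n -> C) : Prop :=
  exists c : {ffun 'I_n -> 'I_r} -> C,
    forall x, Psi x = \sum_(a : {ffun 'I_n -> 'I_r}) c a * \prod_(i < n) w (a i) (x i).

Definition symmetric_vec (D n : nat) (Psi : tidx2 D n -> C) : Prop :=
  forall (s : 'S_n) (x : tidx2 D n), Psi [ffun i => x (s i)] = Psi x.

Definition in_sym_power (D n r : nat) (w : 'I_r -> 'I_D * 'I_D -> C)
  (Psi : tidx2 D n -> C) : Prop :=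
  in_tensor_power w Psi /\ symmetric_vec Psi.

End Defs.

(* Main.v *)
Require Import Defs.
From HB Require Import structures.
From mathcomp Require Import all_boot all_order all_algebra all_fingroup.
From mathcomp Require Import all_classical all_reals all_analysis.
From mathcomp Require Import complex.
Import numFieldTopology.Exports.
Import Order.TTheory GRing.Theory Num.Theory.
Local Open Scope ring_scope.
From mathcomp Require Import spectral sesquilinear.
Import Num.Def.

Section Schur.
Variable R : realType.
Local Notation K := (R[i]).
Variable G : Type.

Lemma schur_core {d1 d2} {p1 : G -> 'M[K]_d1} {p2 : G -> 'M[K]_d2} {T : 'M[K]_(d1, d2)} :
  irreducible_rep p1 -> irreducible_rep p2 ->
  (forall g, p1 g *m T = T *m p2 g) -> T != 0 -> row_free T /\ row_full T.
Proof.
move=> [_ I1] [_ I2] HT T0.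
have HA : forall g, T^T *m (p1 g)^T = (p2 g)^T *m T^T.
  by move=> g; rewrite -!trmx_mul HT.
split.
- have : (<<T^T>> *m (p1 _)^T <= <<T^T>>)%MS.
    by move=> g; rewrite (eqmxMr _ (genmxE _)) genmxE HA submxMl.
  move=> /I1 [/eqmx0P/eqP|].
    by rewrite -mxrank_eq0 genmxE mxrank_eq0 trmx_eq0 (negbTE T0).
  by rewrite /row_full /row_free genmxE mxrank_tr.
- have : (kermx T^T *m (p2 _)^T <= kermx T^T)%MS.
    by move=> g; rewrite sub_kermx -mulmxA -HA mulmxA mulmx_ker mul0mx.
  move=> /I2 [/eqmx0P/eqP|F].
    by rewrite kermx_eq0 /row_free /row_full mxrank_tr.
  exfalso; move: T0; apply/negP; rewrite negbK.
  have : (1%:M <= kermx T^T)%MS by rewrite sub1mx.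
  by rewrite sub_kermx mul1mx trmx_eq0.
Qed.

Lemma schur0 d1 d2 (p1 : G -> 'M[K]_d1) (p2 : G -> 'M[K]_d2) (T : 'M[K]_(d1, d2)) :
  irreducible_rep p1 -> irreducible_rep p2 -> ~ rep_equiv p1 p2 ->
  (forall g, p1 g *m T = T *m p2 g) -> T = 0.
Proof.
move=> I1 I2 NE HT; apply/eqP; apply/negPn/negP => T0.
have [f1 f2] := schur_core I1 I2 HT T0.
by apply: NE; exists T; split.
Qed.

Lemma schur1 d (p : G -> 'M[K]_d) (T : 'M[K]_d) :
  irreducible_rep p -> (forall g, p g *m T = T *m p g) -> T = (\tr T / d%:R)%:M.
Proof.
move=> Ip HT; have [d0 _] := Ip.
have [c Hc] := eigenvalue_closed T d0.
have HT' : forall g, p g *m (T - c%:M) = (T - c%:M) *m p g.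
  by move=> g; rewrite mulmxBr mulmxBl HT scalar_mxC.
have E : T - c%:M = 0.
  apply/eqP; apply/negPn/negP => N0.
  have [rf _] := schur_core Ip Ip HT' N0.
  move: Hc; rewrite /eigenvalue /eigenspace.
  by rewrite kermx_eq0 rf.
have -> : T = c%:M by apply/eqP; rewrite -subr_eq0 E.
rewrite mxtrace_scalar -[c *+ d]mulr_natr mulfK //.
by rewrite pnatr_eq0 -lt0n.
Qed.
End Schur.
Arguments schur0 {R G d1 d2 p1 p2 T}.
Arguments schur1 {R G d p T}.


Section Decomp.
Variable R : realType.
Local Notation K := (R[i]).
Variables (G : Type) (D k : nat) (U : G -> 'M[K]_D) (m : 'I_k -> nat).
Variables (d : 'I_k -> nat) (pi : forall i, G -> 'M[K]_(d i)).
Variables (E : forall i, 'I_(m i) -> 'M[K]_(D, d i)) (P : forall i, 'I_(m i) -> 'M[K]_(d i, D)).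
Hypothesis Hirr : forall i, irreducible_rep (pi i).
Hypothesis Hneq : forall i j, i != j -> ~ rep_equiv (pi i) (pi j).
Hypothesis HE : forall i a g, U g *m E i a = E i a *m pi i g.
Hypothesis HPE1 : forall i a, P i a *m E i a = 1%:M.
Hypothesis HPE0 : forall i a i' a', (i != i') || (val a != val a') -> P i a *m E i' a' = 0.
Hypothesis Hsum : \sum_(i < k) \sum_(a < m i) E i a *m P i a = 1%:M.

Lemma collapseL i (a : 'I_(m i)) q (F : forall i', 'I_(m i') -> 'M[K]_(d i', q)) :
  \sum_(i' < k) \sum_(b < m i') P i a *m E i' b *m F i' b = F i a.
Proof.
rewrite (bigD1 i) //=.
rewrite [X in _ + X]big1 ?addr0; last first.
  by move=> i' ni'; apply: big1 => b _; rewrite HPE0 ?mul0mx // eq_sym ni'.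
rewrite (bigD1 a) //= [X in _ + X]big1 ?addr0; first by rewrite HPE1 mul1mx.
by move=> b nb; rewrite HPE0 ?mul0mx // eq_sym nb orbT.
Qed.

Lemma collapseR i (a : 'I_(m i)) q (F : forall i', 'I_(m i') -> 'M[K]_(q, d i')) :
  \sum_(i' < k) \sum_(b < m i') F i' b *m P i' b *m E i a = F i a.
Proof.
rewrite (bigD1 i) //=.
rewrite [X in _ + X]big1 ?addr0; last first.
  by move=> i' ni'; apply: big1 => b _; rewrite -mulmxA HPE0 ?mulmx0 // ni'.
rewrite (bigD1 a) //= [X in _ + X]big1 ?addr0; first by rewrite -mulmxA HPE1 mulmx1.
by move=> b nb; rewrite -mulmxA HPE0 ?mulmx0 // nb orbT.
Qed.

Lemma PU i (a : 'I_(m i)) g : P i a *m U g = pi i g *m P i a.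
Proof.
rewrite -[P i a *m U g]mulmx1 -Hsum mulmx_sumr.
rewrite -(@collapseL i a _ (fun i' b => pi i' g *m P i' b)).
apply: eq_bigr => i' _; rewrite mulmx_sumr; apply: eq_bigr => b _.
by rewrite !mulmxA -(mulmxA (P i a)) HE !mulmxA.
Qed.

Definition J := {i : 'I_k & ('I_(m i) * 'I_(m i))%type}.
Definition Wm (t : J) : 'M[K]_D := E (tag t) (tagged t).1 *m P (tag t) (tagged t).2.
Definition coef (t : J) (Y : 'M[K]_D) : K :=
  \tr (P (tag t) (tagged t).1 *m Y *m E (tag t) (tagged t).2) / (d (tag t))%:R.

Lemma sumJ (V : nmodType) (F : forall i, 'I_(m i) -> 'I_(m i) -> V) :
  \sum_(t : J) F (tag t) (tagged t).1 (tagged t).2 =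
  \sum_(i < k) \sum_(a < m i) \sum_(b < m i) F i a b.
Proof.
transitivity (\sum_(i < k) \sum_(ab : 'I_(m i) * 'I_(m i)) F i ab.1 ab.2); last first.
  by apply: eq_bigr => i _; rewrite pair_bigA.
by rewrite (@sig_big_dep _ _ _ _ _ (fun _ => true) (fun i _ => true) (fun i ab => F i ab.1 ab.2)).
Qed.

Lemma Kdec (Y : 'M[K]_D) : (forall g, U g *m Y = Y *m U g) ->
  Y = \sum_(t : J) coef t Y *: Wm t.
Proof.
move=> HY.
have TI : forall i (a : 'I_(m i)) i' (b : 'I_(m i')) g,
    pi i g *m (P i a *m Y *m E i' b) = (P i a *m Y *m E i' b) *m pi i' g.
  move=> i a i' b g; rewrite !mulmxA -PU -(mulmxA _ (U g)) HY !mulmxA -!(mulmxA _ _ (E i' b)) HE. by rewrite !mulmxA.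
transitivity (\sum_(i < k) \sum_(a < m i) \sum_(i' < k) \sum_(b < m i')
   E i a *m (P i a *m Y *m E i' b) *m P i' b).
  rewrite -[LHS]mul1mx -[LHS]mulmx1 -Hsum mulmx_suml mulmx_suml; apply: eq_bigr => i _.
  rewrite mulmx_suml mulmx_suml; apply: eq_bigr => a _.
  rewrite mulmx_sumr; apply: eq_bigr => i' _.
  rewrite mulmx_sumr; apply: eq_bigr => b _.
  by rewrite !mulmxA.
rewrite /Wm /coef (sumJ _ (fun i a b => \tr (P i a *m Y *m E i b) / (d i)%:R *: (E i a *m P i b))).
apply: eq_bigr => i _; apply: eq_bigr => a _.
rewrite (bigD1 i) //= [X in _ + X]big1 ?addr0; last first.
  move=> i' ni'; apply: big1 => b _.
  rewrite (schur0 (Hirr i) (Hirr i') (@Hneq i i' _) (TI i a i' b)) ?mulmx0 ?mul0mx //.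
  by rewrite eq_sym.
apply: eq_bigr => b _.
rewrite {1}(schur1 (Hirr i) (TI i a i b)).
by rewrite mul_mx_scalar -scalemxAl.
Qed.

Lemma Windep (c : J -> K) : \sum_(t : J) c t *: Wm t = 0 -> forall t, c t = 0.
Proof.
rewrite (eq_bigr (fun t => c (Tagged (fun i => ('I_(m i) * 'I_(m i))%type) ((tagged t).1, (tagged t).2)) *: Wm t)); last by case=> i [a b].
rewrite /Wm (sumJ _ (fun i a b => c (Tagged (fun i => ('I_(m i) * 'I_(m i))%type) (a, b)) *: (E i a *m P i b))) => H.
move=> [i [a b]] /=.
have := congr1 (fun Z => P i a *m Z *m E i b) H; rewrite mulmx0 mul0mx.
have -> : P i a *m (\sum_(i' < k) \sum_(a' < m i') \sum_(b' < m i')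
      c (Tagged (fun i => ('I_(m i) * 'I_(m i))%type) (a', b')) *: (E i' a' *m P i' b')) *m E i b
   = \sum_(i' < k) \sum_(a' < m i') P i a *m E i' a' *m
      (\sum_(b' < m i') c (Tagged (fun i => ('I_(m i) * 'I_(m i))%type) (a', b')) *: (P i' b' *m E i b)).
  rewrite mulmx_sumr mulmx_suml; apply: eq_bigr => i' _.
  rewrite mulmx_sumr mulmx_suml; apply: eq_bigr => a' _.
  rewrite mulmx_sumr mulmx_suml mulmx_sumr; apply: eq_bigr => b' _.
  by rewrite -!scalemxAr -!scalemxAl !mulmxA.
rewrite (@collapseL i a _ (fun i' a' => \sum_(b' < m i') c (Tagged _ (a', b')) *: (P i' b' *m E i b))).
rewrite (bigD1 b) //= [X in _ + X]big1 ?addr0; last first.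
  by move=> b' nb; rewrite HPE0 ?scaler0 // nb orbT.
rewrite HPE1 => /matrixP /(_ (Ordinal (proj1 (Hirr i))) (Ordinal (proj1 (Hirr i)))).
by rewrite !mxE eqxx mulr1 => ->.
Qed.
End Decomp.
Section Sqrt.
Variable R : realType.
Local Notation K := (R[i]).
Local Open Scope sesquilinear_scope.

Lemma rowE N (A M : 'M[K]_N) j :
  (A *m M *m A ^t*) j j = (row j A *m M *m (row j A) ^t*) 0 0.
Proof.
rewrite !mxE; apply: eq_bigr => l _; rewrite !mxE; congr (_ * _).
by apply: eq_bigr => l' _; rewrite !mxE.
Qed.

Lemma msqrt N (M : 'M[K]_N) : M ^t* = M ->
  (forall v : 'rV_N, 0 <= (v *m M *m v ^t*) 0 0) ->
  exists (S : 'M[K]_N), S *m S ^t* = M /\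
    forall (V : 'M[K]_N), V *m V ^t* = 1%:M -> V *m M *m V ^t* = M -> V *m S = S *m V.
Proof.
move=> HM Hpsd.
set Pm := spectralmx M; set lam := spectral_diag M.
have Hu : Pm *m Pm ^t* = 1%:M by apply/unitarymxP/spectral_unitarymx.
have Hu' : Pm ^t* *m Pm = 1%:M by apply: mulmx1C.
have Hn : M \is normalmx by rewrite qualifE /= HM.
have HMd : M = Pm ^t* *m diag_mx lam *m Pm.
  by rewrite -invmx_unitary ?spectral_unitarymx //; apply/orthomx_spectralP.
have Hdiag : diag_mx lam = Pm *m M *m Pm ^t*.
  by rewrite HMd !mulmxA Hu mul1mx -mulmxA Hu mulmx1.
have lam0 : forall j, 0 <= lam 0 j.
  move=> j; have := Hpsd (row j Pm); rewrite -rowE -Hdiag mxE eqxx mulr1n.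
  by [].
set sq := \row_j sqrtC (lam 0 j).
have sqr : forall j, sq 0 j \is Num.real.
  by move=> j; rewrite mxE; apply: ger0_real; rewrite sqrtC_ge0.
exists (Pm ^t* *m diag_mx sq *m Pm); split.
  rewrite !trmx_mul !map_mxM trmxCK tr_diag_mx map_diag_mx.
  rewrite !mulmxA -(mulmxA _ Pm) Hu mulmx1 -(mulmxA _ (diag_mx sq)) mulmx_diag.
  rewrite HMd; congr (_ *m diag_mx _ *m _); apply/rowP => j; rewrite !mxE.
  rewrite -[X in _ * X]/(conjC (sqrtC (lam 0 j))) conj_Creal -?expr2 ?sqrtCK //.
  by apply: ger0_real; rewrite sqrtC_ge0.
move=> V HV HVM.
have HV' : V ^t* *m V = 1%:M by apply: mulmx1C.
have VM : V *m M = M *m V.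
  by rewrite -{2}HVM -!mulmxA HV' mulmx1.
set B := Pm *m V *m Pm ^t*.
have BL : B *m diag_mx lam = diag_mx lam *m B.
  rewrite Hdiag /B !mulmxA -(mulmxA _ (Pm ^t*) Pm) Hu' mulmx1 -(mulmxA _ V M) VM.
  by rewrite !mulmxA -(mulmxA _ (Pm ^t*) Pm) Hu' mulmx1.
have VB : V = Pm ^t* *m B *m Pm.
  by rewrite /B !mulmxA Hu' mul1mx -mulmxA Hu' mulmx1.
clearbody B.
have BS : B *m diag_mx sq = diag_mx sq *m B.
  apply/matrixP => j l; move/matrixP: BL => /(_ j l).
  rewrite !mul_mx_diag !mul_diag_mx !mxE => H.
  have [->|nz] := eqVneq (B j l) 0; first by rewrite mulr0 mul0r.
  have : lam 0 l = lam 0 j by apply: (mulfI nz); rewrite H mulrC.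
  by move=> ->; rewrite mulrC.
rewrite VB !mulmxA -(mulmxA _ Pm (Pm ^t*)) Hu mulmx1 -(mulmxA _ B) BS.
by rewrite !mulmxA -(mulmxA _ Pm (Pm ^t*)) Hu mulmx1.
Qed.
End Sqrt.

Section Ker.
Variable R : realType.
Local Notation K := (R[i]).
Local Open Scope sesquilinear_scope.
Variable T : finType.
Local Notation N := #|T|.
Definition kmul (A B : T -> T -> K) : T -> T -> K := fun x y => \sum_z A x z * B z y.
Definition kadj (A : T -> T -> K) : T -> T -> K := fun x y => conjC (A y x).
Definition mxk (A : T -> T -> K) : 'M[K]_N := \matrix_(i, j) A (enum_val i) (enum_val j).

Lemma sum_ev (F : T -> K) : \sum_(z : T) F z = \sum_(i < N) F (enum_val i).
Proof. by rewrite (reindex (fun i : 'I_N => enum_val i)) //; exists enum_rank => x _; rewrite ?enum_valK ?enum_rankK. Qed.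

Lemma mxk_mul A B : mxk (kmul A B) = mxk A *m mxk B.
Proof. by apply/matrixP => i j; rewrite !mxE /kmul sum_ev; apply: eq_bigr => l _; rewrite !mxE. Qed.

Lemma mxk_adj A : mxk (kadj A) = (mxk A) ^t*.
Proof. by apply/matrixP => i j; rewrite !mxE. Qed.

Lemma mxk_inj A B : mxk A = mxk B -> forall x y, A x y = B x y.
Proof.
move=> H x y; move/matrixP: H => /(_ (enum_rank x) (enum_rank y)).
by rewrite !mxE !enum_rankK.
Qed.

Lemma mxk_eq A B : (forall x y, A x y = B x y) -> mxk A = mxk B.
Proof. by move=> H; apply/matrixP => i j; rewrite !mxE H. Qed.

Lemma mxk_delta : mxk (fun x y => (x == y)%:R) = 1%:M.
Proof. by apply/matrixP => i j; rewrite !mxE (inj_eq enum_val_inj). Qed.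

Lemma ksqrt (A : T -> T -> K) : (forall x y, A y x = conjC (A x y)) ->
  (forall u : T -> K, 0 <= \sum_x \sum_y conjC (u x) * A x y * u y) ->
  exists S, (forall x y, kmul S (kadj S) x y = A x y) /\
    forall V, (forall x y, kmul V (kadj V) x y = (x == y)%:R) ->
      (forall x y, kmul (kmul V A) (kadj V) x y = A x y) ->
      forall x y, kmul V S x y = kmul S V x y.
Proof.
move=> Hh Hp.
have [|v|Sm [HS HV]] := @msqrt R N (mxk A).
- by apply/matrixP => i j; rewrite !mxE Hh conjCK.
- have := Hp (fun x => conjC (v 0 (enum_rank x))).
  rewrite sum_ev (eq_bigr (fun i => \sum_(j < N) v 0 i * mxk A i j * conjC (v 0 j))); last first.
    move=> i _; rewrite sum_ev; apply: eq_bigr => j _.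
    by rewrite !enum_valK conjCK mxE.
  rewrite !mxE exchange_big /=.
  move=> H; apply: (le_trans H); rewrite le_eqVlt; apply/orP; left; apply/eqP.
  by apply: eq_bigr => j _; rewrite !mxE mulr_suml; apply: eq_bigr => i _; rewrite !mxE.
pose S x y := Sm (enum_rank x) (enum_rank y).
have mS : mxk S = Sm by apply/matrixP => i j; rewrite !mxE /S !enum_valK.
exists S; split.
  by apply: mxk_inj; rewrite mxk_mul mxk_adj mS.
move=> V H1 H2; apply: mxk_inj; rewrite !mxk_mul mS; apply: HV.
  by rewrite -mxk_adj -mxk_mul -mxk_delta; apply: mxk_eq.
by rewrite -mxk_adj -!mxk_mul; apply: mxk_eq.
Qed.
End Ker.
Arguments kmul {R T} A B x y.
Arguments kadj {R T} A x y.
Arguments ksqrt {R T} A.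

Section Tens.
Variable R : realType.
Local Notation K := (R[i]).
Variable T : finType.
Variable n : nat.
Local Notation X := {ffun 'I_n -> T}.

Definition upd (x : X) (l : 'I_n) (t : T) : X := [ffun i => if i == l then t else x i].
Definition tens (V : 'I_n -> T -> T -> K) (x y : X) : K := \prod_i V i (x i) (y i).
Definition kdelta (a b : T) : K := (a == b)%:R.

Lemma upd_id (x : X) l : upd x l (x l) = x.
Proof. by apply/ffunP => i; rewrite ffunE; case: eqP => // ->. Qed.
Lemma upd_at (x : X) l t : upd x l t l = t.
Proof. by rewrite ffunE eqxx. Qed.
Lemma upd_upd (x : X) l t u : upd (upd x l t) l u = upd x l u.
Proof. by apply/ffunP => i; rewrite !ffunE; case: eqP. Qed.

Lemma reduce1 (W : T -> K) (f : X -> K) (x : X) l :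
  \sum_(y : X) (\prod_i (if i == l then W (y i) else ((x i == y i)%:R : K))) * f y =
  \sum_t W t * f (upd x l t).
Proof.
rewrite (partition_big (fun y : X => y l) predT) //=.
apply: eq_bigr => t _.
rewrite (bigD1 (upd x l t)) /=; last by rewrite upd_at.
rewrite [X in _ + X]big1 ?addr0.
  congr (_ * _); rewrite (bigD1 l) //= eqxx upd_at big1 ?mulr1 // => i il.
  by rewrite (negbTE il) ffunE (negbTE il) eqxx.
move=> y /andP [yl ny].
have [i /andP [il xy]] : exists i, (i != l) && (x i != y i).
  apply/existsP; apply: contraR ny => /existsPn H; apply/eqP/ffunP => i.
  rewrite ffunE; case: eqP => [->|/eqP il]; first by rewrite (eqP yl).
  by move: (H i); rewrite il /= negbK => /eqP.
by rewrite (bigD1 i) //= (negbTE il) (negbTE xy) mul0r mul0r.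
Qed.

Lemma kmul_tens V W x y :
  kmul (tens V) (tens W) x y = tens (fun i => kmul (V i) (W i)) x y.
Proof.
rewrite /kmul /tens bigA_distr_bigA /=.
by apply: eq_bigr => z _; rewrite -big_split.
Qed.

Lemma kmul_deltar (A : T -> T -> K) a b : kmul A kdelta a b = A a b.
Proof.
rewrite /kmul (bigD1 b) //= big1 ?addr0 /kdelta ?eqxx ?mulr1 // => t tb.
by rewrite (negbTE tb) mulr0.
Qed.
Lemma kmul_deltal (A : T -> T -> K) a b : kmul kdelta A a b = A a b.
Proof.
rewrite /kmul (bigD1 a) //= big1 ?addr0 /kdelta ?eqxx ?mul1r // => t ta.
by rewrite eq_sym (negbTE ta) mul0r.
Qed.

Lemma tens_delta (x y : X) : tens (fun _ => kdelta) x y = (x == y)%:R.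
Proof.
rewrite /tens /kdelta; have [->|nxy] := eqVneq x y.
  by apply: big1 => i _; rewrite eqxx.
have [i xy] : exists i, x i != y i.
  by apply/existsP; apply: contraR nxy => /existsPn H; apply/eqP/ffunP => i; move: (H i); rewrite negbK => /eqP.
by rewrite (bigD1 i) //= (negbTE xy) mul0r.
Qed.

Definition app (A : X -> X -> K) (Phi : X -> K) (x : X) : K := \sum_y A x y * Phi y.

Lemma app_mul A B Phi x : app (kmul A B) Phi x = app A (app B Phi) x.
Proof.
rewrite /app /kmul.
under eq_bigr => y _ do rewrite mulr_suml.
rewrite exchange_big /=; apply: eq_bigr => z _.
by rewrite mulr_sumr; apply: eq_bigr => y _; rewrite mulrA.
Qed.

Lemma tens_fix (Qk : T -> T -> K) (Phi : X -> K) :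
  (forall l (x : X), \sum_t Qk (x l) t * Phi (upd x l t) = Phi x) ->
  forall x : X, \sum_(y : X) tens (fun _ => Qk) x y * Phi y = Phi x.
Proof.
move=> HQ.
suff H : forall m, (m <= n)%N -> forall x,
    app (tens (fun i => if (i < m)%N then Qk else kdelta)) Phi x = Phi x.
  move=> x; rewrite -(H n (leqnn n) x); apply: eq_bigr => y _.
  by congr (_ * _); apply: eq_bigr => i _; rewrite ltn_ord.
elim=> [_|m IH mn] x.
  rewrite /app (eq_bigr (fun y => (x == y)%:R * Phi y)); last first.
    by move=> y _; rewrite -tens_delta.
  rewrite (bigD1 x) //= eqxx mul1r big1 ?addr0 // => y yx.
  by rewrite eq_sym (negbTE yx) mul0r.
pose l := Ordinal mn.
have E1 : forall x y, tens (fun i => if (i < m.+1)%N then Qk else kdelta) x y =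
    kmul (tens (fun i => if (i < m)%N then Qk else kdelta))
         (tens (fun i => if i == l then Qk else kdelta)) x y.
  move=> x' y'; rewrite kmul_tens; apply: eq_bigr => i _.
  case: (ltngtP i m) => [im|mi|im].
  - by rewrite ltnS ltnW // ifN ?kmul_deltar // -val_eqE /= neq_ltn im.
  - by rewrite ltnS leqNgt mi /= ifN ?kmul_deltal // -val_eqE /= neq_ltn mi orbT.
  - have il : i == l by apply/eqP/val_inj.
    by rewrite il kmul_deltal im ltnSn.
transitivity (app (kmul (tens (fun i => if (i < m)%N then Qk else kdelta))
         (tens (fun i => if i == l then Qk else kdelta))) Phi x).
  by apply: eq_bigr => y _; rewrite E1.
have HB : forall y, app (tens (fun i => if i == l then Qk else kdelta)) Phi y = Phi y.
  move=> y; rewrite /app -(HQ l y) -(reduce1 (Qk (y l)) Phi y l).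
  apply: eq_bigr => z _; congr (_ * _); apply: eq_bigr => i _.
  by case: eqP => [->|_].
rewrite app_mul -(IH (ltnW mn) x); apply: eq_bigr => y _.
by rewrite HB.
Qed.
End Tens.
Arguments upd {T n} x l t.
Arguments tens {R T n} V x y.
Arguments kdelta {R T} a b.
Arguments upd_id {T n} x l.
Arguments upd_at {T n} x l t.
Arguments upd_upd {T n} x l t u.
Arguments reduce1 {R T n} W f x l.
Arguments kmul_tens {R T n} V W x y.
Arguments tens_delta {R T n} x y.
Arguments tens_fix {R T n} Qk Phi.

Section Perm.
Variable R : realType.
Local Notation K := (R[i]).
Variables (D n : nat).
Local Notation X := {ffun 'I_n -> 'I_D}.

Definition pcompf (x : X) (s : 'S_n) : X := [ffun i => x (s i)].

Lemma perm_opE (s : 'S_n) (x z : X) :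
  @perm_op R D n s x z = (z == pcompf x s)%:R.
Proof.
rewrite /perm_op.
suff -> : (x == [ffun i => z (s^-1%g i)]) = (z == pcompf x s) by [].
apply/idP/idP => /eqP ->; apply/eqP/ffunP => i; rewrite !ffunE.
  by rewrite permK.
by rewrite permKV.
Qed.

Lemma pcompf_inj s : injective (pcompf ^~ s).
Proof.
move=> x y /ffunP H; apply/ffunP => i; have := H (s^-1 i)%g; rewrite !ffunE.
by rewrite permKV.
Qed.

Lemma perm_unitary (s : 'S_n) (x y : X) :
  kmul (@perm_op R D n s) (kadj (@perm_op R D n s)) x y = (x == y)%:R.
Proof.
rewrite /kmul /kadj (bigD1 (pcompf x s)) //= big1 ?addr0.
  rewrite !perm_opE eqxx mul1r (inj_eq (@pcompf_inj s)).
  by rewrite conjC_nat.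
by move=> z zx; rewrite perm_opE (negbTE zx) mul0r.
Qed.

Lemma perm_comm (S : X -> X -> K) (s : 'S_n) :
  (forall x y, kmul (@perm_op R D n s) S x y = kmul S (@perm_op R D n s) x y) ->
  forall x y, S (pcompf x s) (pcompf y s) = S x y.
Proof.
move=> H x y; have := H x (pcompf y s).
rewrite /kmul (bigD1 (pcompf x s)) //= big1 ?addr0; last first.
  by move=> z zx; rewrite perm_opE (negbTE zx) mul0r.
rewrite (bigD1 y) //= [X in _ = _ + X]big1 ?addr0; last first.
  by move=> z zy; rewrite perm_opE (inj_eq (@pcompf_inj s)) eq_sym (negbTE zy) mulr0.
by rewrite !perm_opE !eqxx mul1r mulr1.
Qed.
End Perm.

Section TensorFactor.
Variable R : realType.
Local Notation K := (R[i]).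
Variables (D n : nat).
Local Notation X := {ffun 'I_n -> 'I_D}.

Lemma tensor_unitary (V : 'I_n -> 'M[K]_D) :
  (forall i, V i *m adjmx (V i) = 1%:M) ->
  forall x y : X, kmul (tensor_op V) (kadj (tensor_op V)) x y = (x == y)%:R.
Proof.
move=> HV x y.
transitivity (kmul (tens (fun i a b => V i a b)) (tens (fun i => kadj (fun a b => V i a b))) x y).
  rewrite /kmul; apply: eq_bigr => z _; congr (_ * _).
  by rewrite /kadj /tens /tensor_op rmorph_prod.
rewrite kmul_tens -tens_delta; apply: eq_bigr => i _.
have := HV i => /matrixP /(_ (x i) (y i)); rewrite !mxE /kdelta => <-.
by apply: eq_bigr => t _; rewrite !mxE.
Qed.

Lemma factor_comm (V0 : 'M[K]_D) l (S : X -> X -> K) :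
  (forall x y, kmul (tensor_op (fun i => if i == l then V0 else 1%:M)) S x y =
               kmul S (tensor_op (fun i => if i == l then V0 else 1%:M)) x y) ->
  forall x y : X, \sum_u V0 (x l) u * S (upd x l u) y = \sum_u S x (upd y l u) * V0 u (y l).
Proof.
move=> H x y; have := H x y; rewrite /kmul /tensor_op.
rewrite (eq_bigr (fun z : X => (\prod_i (if i == l then V0 (x l) (z i) else ((x i == z i)%:R : K))) * S z y)); last first.
  move=> z _; congr (_ * _); apply: eq_bigr => i _; case: eqP => [->|_] //.
  by rewrite mxE.
rewrite reduce1 => ->.
rewrite (eq_bigr (fun z : X => (\prod_i (if i == l then V0 (z i) (y l) else ((y i == z i)%:R : K))) * S x z)); last first.
  move=> z _; rewrite mulrC; congr (_ * _); apply: eq_bigr => i _; case: eqP => [->|_] //.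
  by rewrite mxE eq_sym.
by rewrite (reduce1 (fun t => V0 t (y l)) (fun z => S x z)); apply: eq_bigr => u _; rewrite mulrC.
Qed.

Lemma slice_comm (V0 : 'M[K]_D) l (S : X -> X -> K) :
  (forall x y : X, \sum_u V0 (x l) u * S (upd x l u) y = \sum_u S x (upd y l u) * V0 u (y l)) ->
  forall x z : X, V0 *m (\matrix_(p, q) S (upd x l p) (upd z l q)) =
                  (\matrix_(p, q) S (upd x l p) (upd z l q)) *m V0.
Proof.
move=> H x z; apply/matrixP => p q; rewrite !mxE.
have := H (upd x l p) (upd z l q); rewrite !upd_at.
under eq_bigr => u _ do rewrite upd_upd.
under [in RHS]eq_bigr => u _ do rewrite upd_upd.
move=> E; transitivity (\sum_u V0 p u * S (upd x l u) (upd z l q)).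
  by apply: eq_bigr => u _; rewrite mxE.
by rewrite E; apply: eq_bigr => u _; rewrite mxE.
Qed.
End TensorFactor.

Lemma trE (R : realType) d D (A : 'M[R[i]]_(d, D)) (Y : 'M[R[i]]_D) (B : 'M[R[i]]_(D, d)) :
  \tr (A *m Y *m B) = \sum_p \sum_q (\sum_r A r p * B q r) * Y p q.
Proof.
rewrite /mxtrace.
transitivity (\sum_r \sum_q \sum_p A r p * Y p q * B q r).
  by apply: eq_bigr => r _; rewrite mxE; apply: eq_bigr => q _; rewrite mxE mulr_suml.
symmetry.
under eq_bigr => p _ do under eq_bigr => q _ do rewrite mulr_suml.
rewrite exchange_big /=.
under eq_bigr => q _ do rewrite exchange_big /=.
rewrite exchange_big /=; apply: eq_bigr => r _; apply: eq_bigr => q _; apply: eq_bigr => p _.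
by rewrite mulrAC.
Qed.
Arguments pcompf {D n} x s.
Arguments pcompf_inj {D n} s.
Arguments perm_opE {R D n} s x z.
Arguments perm_unitary {R D n} s x y.
Arguments perm_comm {R D n} S s.
Arguments tensor_unitary {R D n} V.
Arguments factor_comm {R D n} V0 l S.
Arguments slice_comm {R D n} V0 l S.

Theorem lemma2 (R : realType) (G : topologicalType) (mul : G -> G -> G)
  (one : G) (inv : G -> G) (dA dB : nat) (U : G -> 'M[R[i]]_(dA * dB))
  (k : nat) (m : 'I_k -> nat) (n : nat) (rho : op R (dA * dB) n) :
  compact_group mul one inv ->
  unitary_rep mul one U ->
  decomposes mul one U m ->
  psd rho -> perm_invariant rho -> iid_invariant U rho ->
  exists (w : 'I_(\sum_(i < k) m i ^ 2) -> 'I_(dA * dB) * 'I_(dA * dB) -> R[i])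
         (Psi : tidx2 (dA * dB) n -> R[i]),
    [/\ lin_indep w, in_sym_power w Psi & purifies Psi rho].
Proof.
move=> _ [[_ HU1] HUu _] [_ [d [pi [_ Hirr Hneq [E [P [HE HPE1 HPE0 Hsum]]]]]]].
move=> [Hh Hp] Hperm Hiid.
set D := (dA * dB)%N in U rho Hh Hp Hperm Hiid HUu HU1 HE HPE1 HPE0 Hsum *.
have [S [HSS HSV]] := ksqrt rho Hh Hp.
have SP : forall (s : 'S_n) x y, S (pcompf x s) (pcompf y s) = S x y.
  move=> s; apply: perm_comm; apply: HSV; first exact: perm_unitary.
  exact: Hperm.
have SF : forall l g (x z : tidx D n),
    U g *m (\matrix_(p, q) S (upd x l p) (upd z l q)) =
    (\matrix_(p, q) S (upd x l p) (upd z l q)) *m U g.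
  move=> l g; apply: slice_comm; apply: factor_comm.
  have E1 : forall x y, tensor_op (fun i => if i == l then U g else 1%:M) x y =
                        tensor_op (fun i => U (if i == l then g else one)) x y.
    by move=> x y; apply: eq_bigr => i _; case: (i == l); rewrite ?HU1.
  move=> x y; rewrite /kmul.
  rewrite (eq_bigr (fun z => tensor_op (fun i => U (if i == l then g else one)) x z * S z y)); last by move=> z _; rewrite E1.
  rewrite [RHS](eq_bigr (fun z => S x z * tensor_op (fun i => U (if i == l then g else one)) z y)); last by move=> z _; rewrite E1.
  apply: HSV; first by apply: tensor_unitary => i; apply: HUu.
  exact: Hiid.
have KD := fun Y HY => @Kdec R G D k U m d pi E P Hirr Hneq HE HPE1 HPE0 Hsum Y HY.
have eJ : #|{: J k m}| = (\sum_(i < k) m i ^ 2)%N.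
  transitivity (\sum_(t : J k m) 1)%N; first by rewrite sum1_card.
  rewrite (sumJ k m nat (fun _ _ _ => 1%N)); apply: eq_bigr => i _.
  by rewrite sum_nat_const card_ord sum_nat_const card_ord muln1 expnS expn1.
set r := (\sum_(i < k) m i ^ 2)%N in eJ *.
pose h (j : 'I_r) : J k m := enum_val (cast_ord (esym eJ) j).
pose hinv (t : J k m) : 'I_r := cast_ord eJ (enum_rank t).
have hK : cancel h hinv by move=> j; rewrite /h /hinv enum_valK cast_ordKV.
have hinvK : cancel hinv h by move=> t; rewrite /h /hinv cast_ordK enum_rankK.
have sum_h : forall F : J k m -> R[i], \sum_(j < r) F (h j) = \sum_(t : J k m) F t.
  by move=> F; rewrite (reindex h) //; exists hinv => ? _; rewrite ?hK ?hinvK.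
pose fK (t : J k m) (p q : 'I_D) : R[i] :=
  (\sum_r0 P (tag t) (tagged t).1 r0 p * E (tag t) (tagged t).2 q r0) / (d (tag t))%:R.
have coefE : forall t Y, coef R D k m d E P t Y = \sum_p \sum_q fK t p q * Y p q.
  move=> t Y; rewrite /coef trE mulr_suml; apply: eq_bigr => p _.
  by rewrite mulr_suml; apply: eq_bigr => q _; rewrite mulrAC.
pose w (j : 'I_r) (pq : 'I_D * 'I_D) := Wm R D k m d E P (h j) pq.1 pq.2.
pose fj (j : 'I_r) (pq : 'I_D * 'I_D) := fK (h j) pq.1 pq.2.
pose Qk (s t : 'I_D * 'I_D) := \sum_j w j s * fj j t.
pose Phi (y : tidx2 D n) := S [ffun i => (y i).1] [ffun i => (y i).2].
have HQ : forall l (y : tidx2 D n), \sum_t Qk (y l) t * Phi (upd y l t) = Phi y.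
  move=> l y.
  set x : tidx D n := [ffun i => (y i).1].
  set z : tidx D n := [ffun i => (y i).2].
  set Xm := \matrix_(p, q) S (upd x l p) (upd z l q).
  have Phiupd : forall p q, Phi (upd y l (p, q)) = Xm p q.
    move=> p q; rewrite mxE /Phi; congr (S _ _); apply/ffunP => i; rewrite !ffunE;
    by case: eqP.
  have HX := KD Xm (fun g => SF l g x z).
  transitivity (\sum_j w j (y l) * coef R D k m d E P (h j) Xm).
    rewrite (eq_bigr (fun t => Qk (y l) (t.1, t.2) * Phi (upd y l (t.1, t.2)))); last by case.
    rewrite -(pair_bigA _ (fun p q => Qk (y l) (p, q) * Phi (upd y l (p, q)))) /=.
    transitivity (\sum_p \sum_q \sum_j w j (y l) * (fK (h j) p q * Xm p q)).
      apply: eq_bigr => p _; apply: eq_bigr => q _.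
      by rewrite Phiupd mulr_suml; apply: eq_bigr => j _; rewrite mulrA.
    symmetry.
    transitivity (\sum_j \sum_p \sum_q w j (y l) * (fK (h j) p q * Xm p q)).
      apply: eq_bigr => j _; rewrite coefE mulr_sumr; apply: eq_bigr => p _.
      by rewrite mulr_sumr.
    by rewrite exchange_big /=; apply: eq_bigr => p _; rewrite exchange_big.
  have -> : Phi y = Xm (y l).1 (y l).2.
    have <- : x l = (y l).1 by rewrite ffunE.
    have <- : z l = (y l).2 by rewrite ffunE.
    by rewrite mxE !upd_id.
  rewrite {2}HX summxE; rewrite -sum_h; apply: eq_bigr => j _.
  by rewrite mxE mulrC.
have HT := tens_fix Qk Phi HQ.
have PhiP : forall x z : tidx D n, Phi (pairff x z) = S x z.
  by move=> x z; rewrite /Phi; congr (S _ _); apply/ffunP => i; rewrite !ffunE.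
exists w, Phi; split.
- move=> c Hc j.
  have := @Windep R G D k m d pi E P Hirr HPE1 HPE0 (fun t => c (hinv t)) _ (h j).
  rewrite hK; apply; apply/matrixP => a b; rewrite summxE mxE -sum_h.
  transitivity (\sum_(j0 < r) c j0 * w j0 (a, b)); last exact: Hc.
  by apply: eq_bigr => j' _; rewrite hK mxE.
- split.
    exists (fun al => \sum_(y : tidx2 D n) (\prod_l fj (al l) (y l)) * Phi y) => x.
    rewrite -HT.
    transitivity (\sum_(y : tidx2 D n) \sum_(al : {ffun 'I_n -> 'I_r})
       (\prod_l w (al l) (x l)) * ((\prod_l fj (al l) (y l)) * Phi y)).
      apply: eq_bigr => y _; rewrite /tens /Qk bigA_distr_bigA /= mulr_suml.
      by apply: eq_bigr => al _; rewrite big_split /= mulrA.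
    rewrite exchange_big /=; apply: eq_bigr => al _.
    by rewrite mulr_suml; apply: eq_bigr => y _; rewrite mulrC.
  move=> s y; rewrite /Phi.
  have -> : [ffun i => ([ffun i0 => y (s i0)] i).1] = pcompf [ffun i => (y i).1] s.
    by apply/ffunP => i; rewrite !ffunE.
  have -> : [ffun i => ([ffun i0 => y (s i0)] i).2] = pcompf [ffun i => (y i).2] s.
    by apply/ffunP => i; rewrite !ffunE.
  by rewrite SP.
- move=> x y; rewrite -HSS /kmul /kadj; apply: eq_bigr => z _.
  by rewrite !PhiP.
Qed.
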